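(* Let $G$ be a finite simple graph of order $n$, and for $k\in\{0,1,\dots,n\}$ let $c_k$ denote the number of connected sets of $G$ of order $k$. Then \[ 2c_k\leq (n-k+1)c_{k-1} \] for all $k\in\{2,\dots,n\}$. More generally, \[ (k-t+1)c_k\leq \binom{n-t}{k-t}c_t \] for all $k\in\{2,\dots,n\}$ and $t\in\{1,\dots,k-1\}$.
   Context: A subset $C$ of the vertex set of a graph $G$ is a connected set if it is nonempty and the induced subgraph $G[C]$ is connected. The order of a connected set is its cardinality; in particular $c_0=0$. *)

(* Defs.v *)
From mathcomp Require Import all_boot.
Set Implicit Arguments. Unset Strict Implicit. Unset Printing Implicit Defensive.

(* A finite simple graph: vertex type T (a finType), adjacency e : rel T,
   required symmetric and irreflexive in the theorem. *)

Definition induced_rel (T : finType) (e : rel T) (C : {set T}) : rel T :=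
  [rel x y | [&& x \in C, y \in C & e x y]].

Definition connected_set (T : finType) (e : rel T) (C : {set T}) : bool :=
  (C != set0) &&
  [forall x in C, forall y in C, connect (induced_rel e C) x y].

(* c_k: number of connected sets of order k (so c_0 = 0). *)
Definition num_connected_sets (T : finType) (e : rel T) (k : nat) : nat :=
  #|[set C : {set T} | connected_set e C && (#|C| == k)]|.

(* Main.v *)
Require Import Defs.
From mathcomp Require Import all_boot zify.

Section G.
Variables (T : finType) (e : rel T).
Hypothesis e_sym : symmetric e.

Lemma induced_mono (S C : {set T}) x y : S \subset C ->
  connect (induced_rel e S) x y -> connect (induced_rel e C) x y.
Proof.
move=> sSC; apply: connect_sub => u v /= /and3P[uS vS euv].
apply: connect1; rewrite /induced_rel /= (subsetP sSC _ uS) (subsetP sSC _ vS) euv.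
by [].
Qed.

Lemma exit_edge (S C : {set T}) : S \subset C -> S != set0 ->
  connected_set e C -> S \proper C ->
  exists u v, [/\ u \in S, v \in C, v \notin S & e u v].
Proof.
move=> sSC /set0Pn[s sS] /andP[_ /forallP cC] /properP[_ [z zC zS]].
have := cC s; rewrite (subsetP sSC _ sS) /= => /forallP /(_ z).
rewrite zC /= => /connectP[p pth zl].
set P := fun w => (w \in S) || (w \notin C).
have claim : forall a, P a -> path (induced_rel e C) a p -> ~~ P (last a p) ->
  exists u v, [/\ P u, ~~ P v & induced_rel e C u v].
  elim: p {pth zl} => [|b p IH] a /= aS; first by move=> _; rewrite aS.
  case/andP=> eab pth Pl.
  case Pb: (P b); first exact: IH Pb pth Pl.
  by exists a, b; rewrite Pb aS.
have [u' [v' [uS' vS' euv']]] := claim s (ltac:(by rewrite /P sS)) pth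
  (ltac:(by rewrite /P -zl (negbTE zS) zC)).
move: vS'; rewrite /P negb_or negbK => /andP[v'S v'C].
move: euv' => /and3P[u'C _ eu].
by exists u', v'; split=> //; move: uS'; rewrite /P u'C orbF.
Qed.

Lemma connected_add (S : {set T}) u v : connected_set e S -> u \in S -> e u v ->
  connected_set e (v |: S).
Proof.
move=> /andP[_ /forallP cS] uS euv; apply/andP; split.
  by apply/set0Pn; exists v; rewrite setU11.
have sub : S \subset v |: S by apply: subsetUr.
have cS' : forall x y, x \in S -> y \in S -> connect (induced_rel e (v |: S)) x y.
  move=> x y xS yS; apply: induced_mono sub _.
  by have := cS x; rewrite xS => /forallP /(_ y); rewrite yS.
have evu : induced_rel e (v |: S) v u by rewrite /induced_rel /= setU11 (subsetP sub _ uS) e_sym.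
have euv' : induced_rel e (v |: S) u v by rewrite /induced_rel /= setU11 (subsetP sub _ uS).
apply/forallP=> x; apply/implyP=> xS; apply/forallP=> y; apply/implyP=> yS.
move: xS yS; rewrite !in_setU1 => /orP[/eqP-> | xS] /orP[/eqP-> | yS].
- exact: connect0.
- exact: connect_trans (connect1 evu) (cS' _ _ uS yS).
- exact: connect_trans (cS' _ _ xS uS) (connect1 euv').
- exact: cS'.
Qed.

Lemma connected1 x : connected_set e [set x].
Proof.
apply/andP; split; first by apply/set0Pn; exists x; rewrite set11.
apply/forallP=> y; apply/implyP; rewrite inE => /eqP->.
apply/forallP=> z; apply/implyP; rewrite inE => /eqP->; exact: connect0.
Qed.

Lemma grow d (S C : {set T}) : connected_set e S -> connected_set e C ->
  S \subset C -> #|S| + d <= #|C| ->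
  exists S', [/\ connected_set e S', S \subset S', S' \subset C & #|S'| = #|S| + d].
Proof.
elim: d S => [|d IH] S cS cC sSC hd.
  by exists S; rewrite addn0 subxx.
have pSC : S \proper C by rewrite properEcard sSC; lia.
have S0 : S != set0 by case/andP: cS.
have [u [v [uS vC vS euv]]] := exit_edge _ _ sSC S0 cC pSC.
have cS1 := @connected_add S u v cS uS euv.
have sS1 : v |: S \subset C by rewrite subUset sub1set vC.
have cardS1 : #|v |: S| = #|S|.+1 by rewrite cardsU1 vS.
have [S' [c1 c2 c3 c4]] := IH _ cS1 cC sS1 (ltac:(rewrite cardS1; lia)).
exists S'; split=> //; last by rewrite c4 cardS1 addSnnS.
exact: subset_trans (subsetUr _ _) c2.
Qed.

Definition Fs (C : {set T}) t :=
  [set D in [set D | connected_set e D && (#|D| == t)] | D \subset C].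

Lemma many k : forall C : {set T}, #|C| = k -> connected_set e C ->
  forall t, 1 <= t <= k -> k - t + 1 <= #|Fs C t|.
Proof.
elim: k => [|k IH] C hC cC t /andP[t1 tk]; first lia.
have [tE | tlt] := eqVneq t k.+1.
  subst t; rewrite subnn add0n.
  have : [set C] \subset Fs C k.+1.
    by rewrite sub1set !inE cC hC eqxx subxx.
  by move/subset_leq_card; rewrite cards1.
have tk' : t <= k by lia.
have [x xC] : exists x, x \in C by case/andP: cC => /set0Pn.
have [S [cS _ sSC hS]] := @grow k.-1 _ C (connected1 x) cC
  (ltac:(by rewrite sub1set)) (ltac:(rewrite cards1 hC; lia)).
rewrite cards1 in hS.
have pSC : S \proper C by rewrite properEcard sSC hC hS; lia.
have [_ [v vC vS]] := properP pSC.
have [D [cD vD sDC hD]] := @grow t.-1 _ C (connected1 v) cC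
  (ltac:(by rewrite sub1set)) (ltac:(rewrite cards1 hC; lia)).
rewrite cards1 in hD.
have IH' := IH S (ltac:(lia)) cS t (ltac:(lia)).
have pF : Fs S t \proper Fs C t.
  apply/properP; split.
    apply/subsetP=> E; rewrite !inE => /andP[->] /= ES.
    exact: subset_trans ES sSC.
  exists D; first by rewrite !inE cD sDC hD; lia.
  rewrite !inE; apply/negP=> /andP[_ DS].
  by move: vS; rewrite (subsetP DS) // (subsetP vD) // set11.
have := proper_card pF; lia.
Qed.

End G.
Lemma sum_card (U : finType) (A : {set U}) (P : pred U) :
  \sum_(x in A) (P x : nat) = #|[set x in A | P x]|.
Proof.
rewrite -sum1_card big_mkcond [RHS]big_mkcond /=.
apply: eq_bigr => x _; rewrite !inE; by case: (x \in A); case: (P x).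
Qed.

Lemma supersets (U : finType) (D : {set U}) k t (A : {set {set U}}) :
  (forall C, C \in A -> #|C| = k) -> #|D| = t ->
  #|[set C in A | D \subset C]| <= 'C(#|U| - t, k - t).
Proof.
move=> hA hD.
set W := [set B : {set U} | B \subset ~: D & #|B| == k - t].
have -> : 'C(#|U| - t, k - t) = #|W| by rewrite cards_draws cardsCs setCK hD.
apply: leq_trans (leq_imset_card (fun B => D :|: B) W).
apply: subset_leq_card; apply/subsetP => C; rewrite inE => /andP[CA DC].
have -> : C = D :|: (C :\: D).
  apply/setP=> x; rewrite !inE; case xD: (x \in D); last by [].
  by rewrite (subsetP DC).
apply: imset_f; rewrite inE setDE subsetIr /=.
by rewrite -setDE cardsD (setIidPr DC) hA // hD.
Qed.

Lemma many' (T : finType) (e : rel T) (e_sym : symmetric e) k t (C : {set T}) :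
  C \in [set C | connected_set e C && (#|C| == k)] -> 1 <= t <= k ->
  k - t + 1 <= #|[set D in [set D | connected_set e D && (#|D| == t)] | D \subset C]|.
Proof.
rewrite inE => /andP[cC /eqP hC] ht.
exact: (@many T e e_sym k C hC cC t ht).
Qed.

Theorem lemma2p2 (T : finType) (e : rel T)
  (e_sym : symmetric e) (e_irr : irreflexive e) :
  let n := #|T| in
  let c := num_connected_sets e in
  (forall k, 2 <= k <= n -> 2 * c k <= (n - k + 1) * c k.-1) /\
  (forall k t, 2 <= k <= n -> 1 <= t <= k - 1 ->
     (k - t + 1) * c k <= 'C(n - t, k - t) * c t).
Proof.
move=> n c.
have gen : forall k t, 2 <= k <= n -> 1 <= t <= k - 1 ->
     (k - t + 1) * c k <= 'C(n - t, k - t) * c t.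
  move=> k t hk ht; rewrite /c /num_connected_sets.
  set A := [set C : {set T} | connected_set e C && (#|C| == k)].
  set B := [set C : {set T} | connected_set e C && (#|C| == t)].
  rewrite mulnC -sum_nat_const.
  apply: (@leq_trans (\sum_(C in A) #|[set D in B | D \subset C]|)).
    apply: leq_sum => C CA; apply: many' => //; lia.
  under eq_bigr => C _ do rewrite -sum_card.
  rewrite exchange_big /= mulnC -sum_nat_const.
  apply: leq_sum => D DB; rewrite sum_card.
  apply: supersets.
    by move=> C; rewrite inE => /andP[_ /eqP].
  by move: DB; rewrite inE => /andP[_ /eqP].
split=> // k hk.
have := gen k k.-1 hk (ltac:(lia)).
have -> : k - k.-1 + 1 = 2 by lia.
have -> : n - k.-1 = (n - k + 1) by lia.
have -> : k - k.-1 = 1 by lia.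
by rewrite bin1.
Qed.
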